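(* In the setting below, there exist an affine function $c:\mathbb R^{n\times n}\to\mathbb R$ and an affine matrix-valued function $\mathbf Z:\mathbb R^{n\times n}\to\mathbb R^{n\times n}$, determined by $\mathrm{metric}^{(0)}$, and for each $l\in[1,t]$ a constant $\mu_l\in\mathbb R$ and a matrix $\mathbf B^{(l)}\in\mathbb R^{n\times n}$, determined by $\mathrm{metric}^{(l)}$ and the label vector $\mathbf y$, such that for every $\theta\in\mathbb R^m$, $$\min_{\mathbf Q\in\Delta}\max_{\mathbf P\in\Delta\cap\Gamma}\Big[O^{(0)}(\mathbf Q,\mathbf P)-\langle\mathbf Q^\top\mathbf 1,\Psi^\top\theta\rangle\Big]$$ equals the optimal value of the linear program $$\min_{\mathbf Q\in\Delta,\ \boldsymbol\alpha\in\mathbb R^{n\times n}_{\ge0},\ \boldsymbol\beta\in\mathbb R^t_{\ge0},\ v\ge0}\ v+c(\mathbf Q)-\langle\mathbf Q,\Psi^\top\theta\mathbf 1^\top\rangle+\sum_{l=1}^t\beta_l(\mu_l-\tau_l)$$ $$\text{s.t.}\quad v\ge\mathbf Z(\mathbf Q)_{(i,k)}-\alpha_{i,k}+\tfrac1k\textstyle\sum_j\alpha_{j,k}+\sum_{l=1}^t\beta_l\,(\mathbf B^{(l)})_{(i,k)}\quad\forall i,k\in[1,n].$$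
   Context: $n,m,t\ge1$, $\mathbf y\in\{0,1\}^n$, $l^\star=\sum_iy_i$, $\Psi\in\mathbb R^{m\times n}$, $\tau_1,\dots,\tau_t\in\mathbb R$. Metrics $\mathrm{metric}^{(i)}(\hat{\mathbf y},\check{\mathbf y})=\sum_j\frac{a_j^{(i)}\mathrm{TP}+b_j^{(i)}\mathrm{TN}+f_j^{(i)}(\mathrm{PP},\mathrm{AP})}{g_j^{(i)}(\mathrm{PP},\mathrm{AP})}$, $i=0,\dots,t$, with $\mathrm{TP}=\sum\hat y_i\check y_i$, $\mathrm{TN}=\sum(1-\hat y_i)(1-\check y_i)$, $\mathrm{PP}=\sum\hat y_i$, $\mathrm{AP}=\sum\check y_i$, constants $a_j^{(i)},b_j^{(i)}$, functions $f_j^{(i)},g_j^{(i)}:\{0,\dots,n\}^2\to\mathbb R$ with $g_j^{(i)}$ never zero. $\Delta=\{\mathbf P\in\mathbb R^{n\times n}: p_{i,k}\ge0;\ p_{i,k}\le\frac1k\sum_jp_{j,k}\ \forall i,k;\ \sum_k\frac1k\sum_ip_{i,k}\le1\}$. From $\mathbf P$: $\mathbf p_k^1=\mathbf P_{(:,k)}$ ($k\ge1$), $\mathbf p_0^1=\mathbf 0$; $r_k=\frac1k\mathbf 1^\top\mathbf p_k^1$ ($k\ge1$), $r_0=1-\sum_{k\ge1}r_k$; $\mathbf p_k^0=r_k\mathbf 1-\mathbf p_k^1$; likewise $\mathbf q_l^1,\mathbf q_l^0,s_l$ from $\mathbf Q$. $O^{(0)}(\mathbf Q,\mathbf P)=\sum_{k,l=0}^n\sum_j\frac{1}{g^{(0)}_j(k,l)}\{a^{(0)}_j[\mathbf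 p_k^1\cdot\mathbf q_l^1]+b^{(0)}_j[\mathbf p_k^0\cdot\mathbf q_l^0]+f^{(0)}_j(k,l)r_ks_l\}$. $\Gamma=\{\mathbf P:\sum_{k=0}^n\sum_j\frac{1}{g^{(i)}_j(k,l^\star)}\{a^{(i)}_j[\mathbf p_k^1\cdot\mathbf y]+b^{(i)}_j[\mathbf p_k^0\cdot(\mathbf 1-\mathbf y)]+f^{(i)}_j(k,l^\star)r_k\}\ge\tau_i\ \forall i\in[1,t]\}$. *)

(* Defs.v *)
From Stdlib Require List.
From HB Require Import structures.
From mathcomp Require Import all_boot all_order all_algebra.
From mathcomp Require Import all_classical all_reals ereal.
Set Implicit Arguments. Unset Strict Implicit. Unset Printing Implicit Defensive.
Import Order.TTheory GRing.Theory Num.Theory.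
Local Open Scope ring_scope.
Local Open Scope classical_set_scope.

(* One summand  (a*TP + b*TN + f(PP,AP)) / g(PP,AP)  of a performance metric. *)
Record mterm (R : Type) := MTerm {
  ma : R; mb : R; mf : nat -> nat -> R; mg : nat -> nat -> R }.

(* A metric is the finite sum (over j) of its terms. *)
Definition metric (R : Type) := seq (mterm R).

Section Defs.
Variable R : realType.

Definition g_nonzero (n : nat) (met : metric R) : Prop :=
  forall tm, List.In tm met -> forall k l : nat, (k <= n)%N -> (l <= n)%N -> mg tm k l != 0.

Definition affine_mx (n : nat) (Z : 'M[R]_n -> 'M[R]_n) : Prop :=
  forall (x y : 'M[R]_n) (a : R), Z (a *: x + (1 - a) *: y) = a *: Z x + (1 - a) *: Z y.
Definition affine_fun (n : nat) (c : 'M[R]_n -> R) : Prop :=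
  forall (x y : 'M[R]_n) (a : R), c (a *: x + (1 - a) *: y) = a * c x + (1 - a) * c y.

Variable n : nat.
Implicit Types P Q : 'M[R]_n.

Definition dotv (u v : 'I_n -> R) : R := \sum_(i < n) u i * v i.

(* column k of P is p_{k+1}^1 ; p_k^1 for k in 0..n, p_0^1 = 0 *)
Definition p1 P (k : nat) : 'I_n -> R := fun i => \sum_(j < n | j.+1 == k) P i j.
Definition rk P (k : nat) : R :=
  if k is 0 then 1 - \sum_(j < n) (j.+1%:R)^-1 * \sum_(i < n) P i j
  else (k%:R)^-1 * \sum_(i < n) p1 P k i.
Definition p0 P (k : nat) : 'I_n -> R := fun i => rk P k - p1 P k i.

(* Delta (column index k : 'I_n stands for k+1) *)
Definition inDelta P : Prop :=
  (forall i k : 'I_n, 0 <= P i k) /\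
  (forall i k : 'I_n, P i k <= (k.+1%:R)^-1 * \sum_(j < n) P j k) /\
  \sum_(k < n) (k.+1%:R)^-1 * \sum_(i < n) P i k <= 1.

Definition O0 (met : metric R) Q P : R :=
  \sum_(k < n.+1) \sum_(l < n.+1) \sum_(tm <- met)
    (mg tm k l)^-1 * (ma tm * dotv (p1 P k) (p1 Q l) + mb tm * dotv (p0 P k) (p0 Q l)
                       + mf tm k l * rk P k * rk Q l).

Definition yvec (y : 'I_n -> bool) : 'I_n -> R := fun i => (y i)%:R.
Definition lstar (y : 'I_n -> bool) : nat := \sum_(i < n) (y i : nat).

(* Gamma, with metrics^{(l+1)} = metrics l for l : 'I_t *)
Definition inGamma (t : nat) (metrics : 'I_t -> metric R) (y : 'I_n -> bool)
  (tau : 'I_t -> R) P : Prop :=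
  forall l : 'I_t,
    tau l <= \sum_(k < n.+1) \sum_(tm <- metrics l)
      (mg tm k (lstar y))^-1 *
        (ma tm * dotv (p1 P k) (yvec y)
         + mb tm * dotv (p0 P k) (fun i => 1 - yvec y i)
         + mf tm k (lstar y) * rk P k).

Definition PsiT_theta (m : nat) (Psi : 'M[R]_(m, n)) (theta : 'cV[R]_m) : 'I_n -> R :=
  fun i => (Psi^T *m theta) i ord0.

Definition Q1 Q : 'I_n -> R := fun i => \sum_(k < n) Q i k.

Definition minmax_value (met0 : metric R) (t : nat) (metrics : 'I_t -> metric R)
  (y : 'I_n -> bool) (tau : 'I_t -> R) (m : nat) (Psi : 'M[R]_(m, n))
  (theta : 'cV[R]_m) : \bar R :=
  ereal_inf [set ereal_sup
      [set ((O0 met0 Q P - dotv (Q1 Q) (PsiT_theta Psi theta))%:E)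
         | P in [set P | inDelta P /\ inGamma metrics y tau P]]
    | Q in [set Q | inDelta Q]].

Definition lp_value (c : 'M[R]_n -> R) (Z : 'M[R]_n -> 'M[R]_n) (t : nat)
  (mu : 'I_t -> R) (B : 'I_t -> 'M[R]_n) (tau : 'I_t -> R) (m : nat)
  (Psi : 'M[R]_(m, n)) (theta : 'cV[R]_m) : \bar R :=
  ereal_inf [set z : \bar R | exists (Q alpha : 'M[R]_n) (beta : 'I_t -> R) (v : R),
     [/\ inDelta Q, (forall i k, 0 <= alpha i k), (forall l, 0 <= beta l) /\ 0 <= v,
      (forall i k : 'I_n,
         Z Q i k - alpha i k + (k.+1%:R)^-1 * \sum_(j < n) alpha j k
           + \sum_(l < t) beta l * B l i k <= v) &
      z = (v + c Q - \sum_(i < n) \sum_(k < n) Q i k * PsiT_theta Psi theta i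
             + \sum_(l < t) beta l * (mu l - tau l))%:E]].

End Defs.

(* Main.v *)
Require Import Defs.
From HB Require Import structures.
From mathcomp Require Import all_boot all_order all_algebra.
From mathcomp Require Import all_classical all_reals ereal.
From mathcomp Require Import ring lra zify.
Import Order.TTheory GRing.Theory Num.Theory.
Set Implicit Arguments. Unset Strict Implicit. Unset Printing Implicit Defensive.
Local Open Scope ring_scope.

Section FM.
Variable R : realType.

Definition aff := ((nat -> R) * R)%type.
Definition ev (N : nat) (g : aff) (x : nat -> R) : R := \sum_(i < N) g.1 i * x i + g.2.
Definition comb (J : finType) (c : J -> R) (g : J -> aff) : aff :=
  (fun i => \sum_j c j * (g j).1 i, \sum_j c j * (g j).2).

Lemma ev_comb N (J : finType) (c : J -> R) g x :
  ev N (comb c g) x = \sum_j c j * ev N (g j) x.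
Proof.
rewrite /ev /=.
under eq_bigr do rewrite mulr_suml.
rewrite exchange_big /= -big_split /=.
apply: eq_bigr => j _; rewrite mulrDr mulr_sumr; congr (_ + _).
by apply: eq_bigr => i _; rewrite mulrA.
Qed.

Lemma evS N g x : ev N.+1 g x = ev N g x + g.1 N * x N.
Proof. by rewrite /ev big_ord_recr /= addrAC. Qed.

Lemma ev_upd N g x t : ev N g (fun i => if i == N then t else x i) = ev N g x.
Proof.
rewrite /ev; congr (_ + _); apply: eq_bigr => i _.
by by rewrite (ltn_eqF (ltn_ord i)).
Qed.

Lemma sum_delta1 (J : finType) (j0 : J) (F : J -> R) (e : R) :
  \sum_j (if j == j0 then e else 0) * F j = e * F j0.
Proof.
rewrite (bigD1 j0) //= eqxx big1 ?addr0 // => j /negbTE ->; exact: mul0r.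
Qed.

Lemma one_dim (J : finType) (r a : J -> R) :
  (forall j, a j = 0 -> 0 <= r j) ->
  (forall p q, 0 < a p -> a q < 0 -> 0 <= - a q * r p + a p * r q) ->
  exists t, forall j, 0 <= r j + a j * t.
Proof.
move=> H0 H2.
case: (pickP (fun p => 0 < a p)) => [p0 Hp0 | Hnone].
  case: (@arg_maxP _ _ _ p0 (fun p => 0 < a p) (fun p => - r p / a p) Hp0) => ps /= Hps Hmax.
  exists (- r ps / a ps) => j.
  case: (ltgtP (a j) 0) => Haj.
  - have := H2 _ _ Hps Haj => h.
    have -> : r j + a j * (- r ps / a ps) = (- a j * r ps + a ps * r j) / a ps.
      by field; rewrite gt_eqF.
    by rewrite divr_ge0 // ltW.
  - have := Hmax j Haj; rewrite ler_pdivrMr // => h.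
    by rewrite mulrC; lra.
  - by rewrite Haj mul0r addr0 H0.
case: (pickP (fun q => a q < 0)) => [q0 Hq0 | Hnone2].
  case: (@arg_minP _ _ _ q0 (fun q => a q < 0) (fun q => r q / - a q) Hq0) => qs /= Hqs Hmin.
  exists (r qs / - a qs) => j.
  case: (ltgtP (a j) 0) => Haj.
  - have := Hmin j Haj; rewrite ler_pdivlMr ?oppr_gt0 // => h.
    by rewrite mulrC; lra.
  - by move: (Hnone j); rewrite /= Haj.
  - by rewrite Haj mul0r addr0 H0.
exists 0 => j; rewrite mulr0 addr0; apply: H0.
case: (ltgtP (a j) 0) => //.
  by move=> h; move: (Hnone2 j); rewrite /= h.
by move=> h; move: (Hnone j); rewrite /= h.
Qed.

Theorem FM N : forall (J : finType) (g : J -> aff),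
  (exists x, forall j, 0 <= ev N (g j) x) \/
  (exists w : J -> R, (forall j, 0 <= w j) /\ forall x, \sum_j w j * ev N (g j) x = -1).
Proof.
elim: N => [|N IH] J g.
  have ev0 : forall h x, ev 0 h x = h.2 by move=> h x; rewrite /ev big_ord0 add0r.
  case: (pickP (fun j => (g j).2 < 0)) => [j0 Hj0 | Hn].
    right; exists (fun j => if j == j0 then (- (g j0).2)^-1 else 0); split.
      by move=> j; case: eqP => // _; rewrite invr_ge0 oppr_ge0 ltW.
    move=> x; rewrite sum_delta1 ev0; field.
    by rewrite lt_eqF.
  left; exists (fun _ => 0) => j; rewrite ev0.
  by move: (Hn j) => /= /negbT; rewrite -leNgt.
pose a j := (g j).1 N.
pose c (j' : (J + (J * J))%type) (j : J) : R :=
  match j' with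
  | inl j0 => if j == j0 then (if a j0 == 0 then 1 else 0) else 0
  | inr pq => (if j == pq.1 then (if (0 < a pq.1) && (a pq.2 < 0) then - a pq.2 else 0) else 0)
            + (if j == pq.2 then (if (0 < a pq.1) && (a pq.2 < 0) then a pq.1 else 0) else 0)
  end.
have c_ge0 : forall j' j, 0 <= c j' j.
  move=> [j0|[p q]] j /=.
    by case: (j == j0); case: (a j0 == 0).
  case Hc: ((0 < a p) && (a q < 0)).
    move/andP: Hc => [hp hq].
    by apply: addr_ge0; case: (_ == _) => //; [rewrite oppr_ge0 ltW | rewrite ltW].
  by case: (_ == _); case: (_ == _); rewrite ?addr0.
have cN : forall j' , \sum_j c j' j * a j = 0.
  move=> [j0|[p q]] /=.
    rewrite sum_delta1; by case: eqP => [->|]; rewrite ?mulr0 ?mul0r.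
  under eq_bigr do rewrite mulrDl.
  rewrite big_split /= !sum_delta1.
  by case: ((0 < a p) && (a q < 0)); rewrite ?mul0r ?addr0 //; ring.
have evc : forall j' x, \sum_j c j' j * ev N (g j) x = ev N (comb (c j') g) x.
  by move=> j' x; rewrite ev_comb.
case: (IH _ (fun j' => comb (c j') g)) => [[x Hx] | [w [Hw Hsum]]].
  left.
  pose r j := ev N (g j) x.
  have [t Ht] : exists t, forall j, 0 <= r j + a j * t.
    apply: one_dim.
      move=> j Haj; have := Hx (inl j); rewrite -evc /= sum_delta1 Haj eqxx mul1r.
      done.
    move=> p q Hp Hq; have := Hx (inr (p, q)); rewrite -evc /=.
    under eq_bigr do rewrite mulrDl.
    by rewrite big_split /= !sum_delta1 Hp Hq.
  exists (fun i => if i == N then t else x i) => j.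
  by rewrite evS ev_upd eqxx; exact: (Ht j).
right.
exists (fun j => \sum_j' w j' * c j' j); split.
  by move=> j; apply: sumr_ge0 => j' _; apply: mulr_ge0.
move=> x.
under eq_bigr do rewrite mulr_suml.
rewrite exchange_big /=.
rewrite -(Hsum x); apply: eq_bigr => j' _.
under eq_bigr do rewrite -mulrA.
rewrite -mulr_sumr; congr (_ * _).
rewrite -ev_comb evS /=.
suff -> : \sum_j c j' j * (g j).1 N = 0 by rewrite mul0r addr0.
exact: cN.
Qed.

End FM.

Section Aff.
Variable R : realType.
Variable n : nat.

Definition lf (W P : 'M[R]_n) : R := \sum_i \sum_k P i k * W i k.
Definition affP (h : 'M[R]_n -> R) := exists c W, forall P, h P = c + lf W P.

Lemma lf_delta W i k : lf W (delta_mx i k) = W i k.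
Proof.
rewrite /lf (bigD1 i) //= [X in _ + X]big1 => [|i' Hi]; last first.
  by apply: big1 => k' _; rewrite mxE (negbTE Hi) mul0r.
rewrite addr0 (bigD1 k) //= [X in _ + X]big1 => [|k' Hk]; last first.
  by rewrite mxE (negbTE Hk) andbF mul0r.
by rewrite addr0 mxE !eqxx mul1r.
Qed.

Lemma lf0 W : lf W 0 = 0.
Proof. by rewrite /lf big1 // => i _; rewrite big1 // => k _; rewrite mxE mul0r. Qed.

Lemma lf0W P : lf 0 P = 0.
Proof. by rewrite /lf big1 // => i _; rewrite big1 // => k _; rewrite mxE mulr0. Qed.

Lemma lfD W1 W2 P : lf (W1 + W2) P = lf W1 P + lf W2 P.
Proof.
rewrite /lf -big_split; apply: eq_bigr => i _; rewrite -big_split; apply: eq_bigr => k _.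
by rewrite mxE mulrDr.
Qed.

Lemma lfZ a W P : lf (a *: W) P = a * lf W P.
Proof.
rewrite /lf mulr_sumr; apply: eq_bigr => i _; rewrite mulr_sumr; apply: eq_bigr => k _.
by rewrite mxE mulrCA.
Qed.

Lemma lf_mx (F : 'I_n -> 'I_n -> R) P :
  lf (\matrix_(i, k) F i k) P = \sum_i \sum_k P i k * F i k.
Proof. by apply: eq_bigr => i _; apply: eq_bigr => k _; rewrite mxE. Qed.

Lemma lf_sum (I : Type) (s : seq I) (Pr : pred I) (F : I -> 'M[R]_n) P :
  lf (\sum_(i <- s | Pr i) F i) P = \sum_(i <- s | Pr i) lf (F i) P.
Proof.
elim: s => [|x s IH]; first by rewrite !big_nil lf0W.
by rewrite !big_cons; case: (Pr x); rewrite ?lfD IH.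
Qed.

Lemma aff_cst c : affP (fun _ => c).
Proof. by exists c, 0 => P; rewrite lf0W addr0. Qed.

Lemma aff_entry i k : affP (fun P => P i k).
Proof.
exists 0, (delta_mx i k) => P.
rewrite add0r /lf (bigD1 i) //= [X in _ + X]big1 => [|i' Hi]; last first.
  by apply: big1 => k' _; rewrite mxE (negbTE Hi) mulr0.
rewrite addr0 (bigD1 k) //= [X in _ + X]big1 => [|k' Hk]; last first.
  by rewrite mxE (negbTE Hk) andbF mulr0.
by rewrite addr0 mxE !eqxx mulr1.
Qed.

Lemma aff_add f g : affP f -> affP g -> affP (fun P => f P + g P).
Proof.
move=> [c1 [W1 H1]] [c2 [W2 H2]]; exists (c1 + c2), (W1 + W2) => P.
by rewrite H1 H2 lfD; ring.
Qed.

Lemma aff_scale a f : affP f -> affP (fun P => a * f P).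
Proof.
move=> [c1 [W1 H1]]; exists (a * c1), (a *: W1) => P.
by rewrite H1 lfZ mulrDr.
Qed.

Lemma aff_mulr a f : affP f -> affP (fun P => f P * a).
Proof.
move=> H; have := aff_scale a H.
by move=> [c [W HW]]; exists c, W => P; rewrite mulrC HW.
Qed.

Lemma aff_opp f : affP f -> affP (fun P => - f P).
Proof.
move=> H; have := aff_scale (-1) H.
by move=> [c [W HW]]; exists c, W => P; rewrite -HW mulN1r.
Qed.

Lemma aff_sub f g : affP f -> affP g -> affP (fun P => f P - g P).
Proof. by move=> Hf Hg; apply: aff_add => //; apply: aff_opp. Qed.

Lemma aff_sum (I : Type) (s : seq I) (Pr : pred I) (F : I -> 'M[R]_n -> R) :
  (forall i, affP (F i)) -> affP (fun P => \sum_(i <- s | Pr i) F i P).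
Proof.
move=> HF; elim: s => [|x s IH].
  by exists 0, 0 => P; rewrite big_nil lf0W addr0.
case Hx: (Pr x).
  have := aff_add (HF x) IH.
  by move=> [c [W HW]]; exists c, W => P; rewrite big_cons Hx -HW.
by move: IH => [c [W HW]]; exists c, W => P; rewrite big_cons Hx -HW.
Qed.

Definition Wc (h : 'M[R]_n -> R) : 'M[R]_n := \matrix_(i, k) (h (delta_mx i k) - h 0).

Lemma aff_expand h : affP h -> forall P, h P = h 0 + lf (Wc h) P.
Proof.
move=> [c [W HW]] P.
have -> : Wc h = W.
  by apply/matrixP => i k; rewrite mxE !HW lf_delta lf0 addr0 addrC addKr.
by rewrite HW (HW 0) lf0 addr0.
Qed.

Lemma affP_affine h : affP h -> affine_fun h.
Proof.
move=> [c [W HW]] x y a; rewrite !HW.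
rewrite /lf.
have -> : \sum_i \sum_k (a *: x + (1 - a) *: y) i k * W i k =
  a * (\sum_i \sum_k x i k * W i k) + (1 - a) * (\sum_i \sum_k y i k * W i k).
  rewrite !mulr_sumr -big_split; apply: eq_bigr => i _.
  rewrite !mulr_sumr -big_split; apply: eq_bigr => k _.
  by rewrite !mxE /=; ring.
ring.
Qed.

End Aff.

Section Farkas.
Variable R : realType.
Variable n : nat.
Hypothesis hn : (0 < n)%N.

Lemma sum_ord_delta N m (F : nat -> R) : (m < N)%N ->
  \sum_(l < N) ((l == m :> nat)%:R) * F l = F m.
Proof.
move=> Hm; rewrite (bigD1 (Ordinal Hm)) //= eqxx mul1r big1 ?addr0 // => l Hl.
have -> : (l == m :> nat) = false.
  by apply/negbTE; apply: contra Hl => /eqP H; apply/eqP/val_inj.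
by rewrite mul0r.
Qed.

Lemma idx_lt (i k : 'I_n) : (i * n + k < n * n)%N.
Proof. have := ltn_ord i; have := ltn_ord k; nia. Qed.

Lemma idx_inj (i k i' k' : 'I_n) :
  ((i * n + k)%N == (i' * n + k')%N) = (i == i') && (k == k').
Proof.
apply/eqP/andP => [H|[/eqP -> /eqP ->]] //.
have Hd := congr1 (fun z => z %/ n)%N H; have Hm := congr1 (fun z => z %% n)%N H.
move: Hd Hm => /=; rewrite !divnMDl // !modnMDl !divn_small // !modn_small // !addn0.
by move=> Hi Hk; split; apply/eqP/val_inj.
Qed.

Definition enc (W : 'M[R]_n) : nat -> R :=
  fun l => \sum_(i < n) \sum_(k < n) ((l == (i * n + k)%N) %:R) * W i k.

Lemma ev_enc W c x : ev (n * n) (enc W, c) x = \sum_(i < n) \sum_(k < n) x (i * n + k)%N * W i k + c.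
Proof.
rewrite /ev /=; congr (_ + _).
under eq_bigr do rewrite mulr_suml.
rewrite exchange_big; apply: eq_bigr => i _.
under eq_bigr do rewrite mulr_suml.
rewrite exchange_big; apply: eq_bigr => k _.
under eq_bigr do rewrite -mulrA [W i k * _]mulrC.
exact: (sum_ord_delta (fun l => x l * W i k) (idx_lt i k)).
Qed.

Definition x_of (P : 'M[R]_n) : nat -> R :=
  fun l => lf P (\matrix_(i', k') (((i' * n + k')%N == l)%:R)).

Lemma x_ofE P (i k : 'I_n) : x_of P (i * n + k)%N = P i k.
Proof.
rewrite /x_of; have -> : (\matrix_(i', k') (((i' * n + k')%N == (i * n + k)%N)%:R) : 'M[R]_n)
   = delta_mx i k.
  by apply/matrixP => i' k'; rewrite !mxE idx_inj.
by rewrite lf_delta.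
Qed.

Lemma farkas_mx (J : finType) (g : J -> 'M[R]_n -> R) :
  (forall j, affP (g j)) ->
  (exists P, forall j, 0 <= g j P) \/
  (exists w : J -> R, (forall j, 0 <= w j) /\ forall P, \sum_j w j * g j P = -1).
Proof.
move=> Ha.
case: (FM (n * n) (fun j => (enc (Wc (g j)), g j 0))) => [[x Hx]|[w [Hw Hs]]].
  left; exists (\matrix_(i, k) x (i * n + k)%N) => j.
  rewrite (aff_expand (Ha j)); have := Hx j; rewrite ev_enc addrC.
  suff -> : lf (Wc (g j)) (\matrix_(i, k) x (i * n + k)%N) =
            \sum_(i < n) \sum_(k < n) x (i * n + k)%N * Wc (g j) i k by [].
  by apply: eq_bigr => i _; apply: eq_bigr => k _; rewrite mxE.
right; exists w; split => // P.
rewrite -(Hs (x_of P)); apply: eq_bigr => j _; congr (_ * _).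
rewrite ev_enc (aff_expand (Ha j) P) addrC; congr (_ + _).
by apply: eq_bigr => i _; apply: eq_bigr => k _; rewrite x_ofE.
Qed.

Lemma lp_strong (J : finType) (g : J -> 'M[R]_n -> R) (f : 'M[R]_n -> R) :
  (forall j, affP (g j)) -> affP f ->
  (exists (w0 : J -> R) K0, (forall j, 0 <= w0 j) /\
      forall P, f P + \sum_j w0 j * g j P = K0) ->
  forall M, (forall P, (forall j, 0 <= g j P) -> f P < M) ->
  exists (w : J -> R) K, [/\ forall j, 0 <= w j, K <= M &
      forall P, f P + \sum_j w j * g j P = K].
Proof.
move=> Hg Hf [w0 [K0 [Hw0 HK0]]] M HM.
pose g' (o : (J + 'I_1)%type) : 'M[R]_n -> R :=
  match o with inl j => g j | inr _ => fun P => f P - M end.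
have Hg' : forall o, affP (g' o).
  by move=> [j|_] /=; [apply: Hg | apply: aff_sub => //; apply: aff_cst].
case: (farkas_mx Hg') => [[P HP]|[w [Hw Hs]]].
  exfalso; have := HM P (fun j => HP (inl j)); have := HP (inr ord0) => /=.
  by rewrite subr_ge0 => h1 h2; move: (lt_le_trans h2 h1); rewrite ltxx.
have Hs' : forall P, \sum_j w (inl j) * g j P + w (inr ord0) * (f P - M) = -1.
  by move=> P; rewrite -(Hs P) big_sumType /= big_ord1.
case: (ltgtP (w (inr ord0)) 0) => Hwn.
- by move: (Hw (inr ord0)); rewrite leNgt Hwn.
- exists (fun j => w (inl j) / w (inr ord0)), (M - (w (inr ord0))^-1); split.
  + by move=> j; rewrite divr_ge0 // ltW.
  + by rewrite gerBl invr_ge0 ltW.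
  + move=> P; have := Hs' P.
    move=> h.
    under eq_bigr do rewrite mulrAC.
    rewrite -mulr_suml.
    have hw : w (inr ord0) != 0 by rewrite gt_eqF.
    have -> : \sum_i w (inl i) * g i P = -1 - w (inr ord0) * (f P - M) by rewrite -h; ring.
    by field.
- pose s := `|K0 - M|.
  exists (fun j => w0 j + s * w (inl j)), (K0 - s); split.
  + by move=> j; apply: addr_ge0; [exact: Hw0 | apply: mulr_ge0; [exact: normr_ge0 | exact: Hw]].
  + rewrite /s lerBlDr -lerBlDl; exact: ler_norm.
  + move=> P; have := Hs' P; rewrite Hwn mul0r addr0 => h.
    under eq_bigr do rewrite mulrDl.
    rewrite big_split /= addrA HK0.
    under eq_bigr do rewrite -mulrA.
    by rewrite -mulr_sumr h mulrN1.
Qed.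

End Farkas.

Section Concrete.
Variable R : realType.
Variable n : nat.

Definition Gf (met : metric R) (y : 'I_n -> bool) (P : 'M[R]_n) : R :=
  \sum_(k < n.+1) \sum_(tm <- met)
      (mg tm k (lstar y))^-1 *
        (ma tm * dotv (p1 P k) (yvec R y)
         + mb tm * dotv (p0 P k) (fun i => 1 - yvec R y i)
         + mf tm k (lstar y) * rk P k).

Definition Cf (met : metric R) (Q : 'M[R]_n) : R := O0 met Q 0.
Definition Zff (met : metric R) (Q : 'M[R]_n) : 'M[R]_n :=
  \matrix_(i, k) (k.+1%:R * (O0 met Q (delta_mx i k) - O0 met Q 0)).
Definition Muf (met : metric R) (y : 'I_n -> bool) : R := Gf met y 0.
Definition Bff (met : metric R) (y : 'I_n -> bool) : 'M[R]_n :=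
  \matrix_(i, k) (k.+1%:R * (Gf met y (delta_mx i k) - Gf met y 0)).

Lemma aff_p1 k i : affP (fun P : 'M[R]_n => p1 P k i).
Proof. by apply: aff_sum => j; apply: aff_entry. Qed.

Lemma aff_rk k : affP (fun P : 'M[R]_n => rk P k).
Proof.
case: k => [|k]; rewrite /rk.
  apply: aff_sub; first exact: aff_cst.
  apply: aff_sum => j; apply: aff_scale; apply: aff_sum => i; exact: aff_entry.
apply: aff_scale; apply: aff_sum => i; exact: aff_p1.
Qed.

Lemma aff_p0 k i : affP (fun P : 'M[R]_n => p0 P k i).
Proof. by apply: aff_sub; [apply: aff_rk | apply: aff_p1]. Qed.

Lemma aff_O0P met (Q : 'M[R]_n) : affP (fun P => O0 met Q P).
Proof.
apply: aff_sum => k; apply: aff_sum => l; apply: aff_sum => tm.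
apply: aff_scale; apply: aff_add; [apply: aff_add|].
- apply: aff_scale; apply: aff_sum => i; apply: aff_mulr; exact: aff_p1.
- apply: aff_scale; apply: aff_sum => i; apply: aff_mulr; exact: aff_p0.
- apply: aff_mulr; apply: aff_scale; exact: aff_rk.
Qed.

Lemma aff_O0Q met (P : 'M[R]_n) : affP (fun Q => O0 met Q P).
Proof.
apply: aff_sum => k; apply: aff_sum => l; apply: aff_sum => tm.
apply: aff_scale; apply: aff_add; [apply: aff_add|].
- apply: aff_scale; apply: aff_sum => i; apply: aff_scale; exact: aff_p1.
- apply: aff_scale; apply: aff_sum => i; apply: aff_scale; exact: aff_p0.
- apply: aff_scale; exact: aff_rk.
Qed.

Lemma aff_Gf met y : affP (Gf met y).
Proof.
apply: aff_sum => k; apply: aff_sum => tm.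
apply: aff_scale; apply: aff_add; [apply: aff_add|].
- apply: aff_scale; apply: aff_sum => i; apply: aff_mulr; exact: aff_p1.
- apply: aff_scale; apply: aff_sum => i; apply: aff_mulr; exact: aff_p0.
- apply: aff_scale; exact: aff_rk.
Qed.

Lemma Cf_affine met : affine_fun (Cf met).
Proof. exact: affP_affine (aff_O0Q met 0). Qed.

Lemma Zff_affine met : affine_mx (Zff met).
Proof.
move=> x y a; apply/matrixP => i k; rewrite !mxE.
rewrite (affP_affine (aff_O0Q met (delta_mx i k))) (affP_affine (aff_O0Q met 0)).
ring.
Qed.

End Concrete.

Section PerQ.
Variable R : realType.
Variable n : nat.
Variables (met0 : metric R) (t : nat) (metrics : 'I_t -> metric R) (y : 'I_n -> bool).
Variables (m : nat) (Psi : 'M[R]_(m, n)) (tau : 'I_t -> R) (theta : 'cV[R]_m).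
Variable Q : 'M[R]_n.
Hypothesis hn : (0 < n)%N.

Definition psv := PsiT_theta Psi theta.
Definition ps := \sum_(i < n) \sum_(k < n) Q i k * psv i.
Definition fQ (P : 'M[R]_n) := O0 met0 Q P - dotv (Q1 Q) psv.
Definition Zq := Zff met0 Q.
Definition c0 := Cf met0 Q.
Definition mu (l : 'I_t) := Muf (metrics l) y.
Definition Bm (l : 'I_t) := Bff (metrics l) y.

Lemma k1_neq0 (k : 'I_n) : (k.+1%:R : R) != 0.
Proof. by rewrite pnatr_eq0. Qed.
Lemma k1_gt0 (k : 'I_n) : 0 < (k.+1%:R : R)^-1.
Proof. by rewrite invr_gt0 ltr0Sn. Qed.

Lemma expand_k h : affP h -> forall P, h P = h 0 +
  lf (\matrix_(i, k) ((k.+1%:R)^-1 * (\matrix_(i, k) (k.+1%:R * (h (delta_mx i k) - h 0)) : 'M[R]_n) i k)) P.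
Proof.
move=> Ha P; rewrite (aff_expand Ha P); congr (_ + lf _ P).
by apply/matrixP => i k; rewrite !mxE mulKf ?k1_neq0.
Qed.

Lemma f_expand P : fQ P = c0 - ps + lf (\matrix_(i, k) ((k.+1%:R)^-1 * Zq i k)) P.
Proof.
rewrite /fQ (expand_k (aff_O0P met0 Q) P) /c0 /Cf /Zq /Zff.
have -> : dotv (Q1 Q) psv = ps.
  by rewrite /dotv /ps /Q1; apply: eq_bigr => i _; rewrite mulr_suml.
ring.
Qed.

Lemma G_expand l P : Gf (metrics l) y P = mu l + lf (\matrix_(i, k) ((k.+1%:R)^-1 * Bm l i k)) P.
Proof. by rewrite (expand_k (aff_Gf (metrics l) y) P). Qed.

Definition J := ((('I_n * 'I_n) + ('I_n * 'I_n) + 'I_1) + 'I_t)%type.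
Definition jS i k : J := inl (inl (inl (i, k))).
Definition jA i k : J := inl (inl (inr (i, k))).
Definition jV : J := inl (inr ord0).
Definition jB l : J := inr l.

Definition g (j : J) (P : 'M[R]_n) : R :=
  match j with
  | inl (inl (inl ik)) => (ik.2.+1%:R)^-1 * P ik.1 ik.2
  | inl (inl (inr ik)) => (ik.2.+1%:R)^-1 * ((ik.2.+1%:R)^-1 * \sum_(j < n) P j ik.2 - P ik.1 ik.2)
  | inl (inr _) => 1 - \sum_(k < n) (k.+1%:R)^-1 * \sum_(i < n) P i k
  | inr l => Gf (metrics l) y P - tau l
  end.

Lemma g_aff j : affP (g j).
Proof.
case: j => [[[[i k]|[i k]]|o]|l] /=.
- by apply: aff_scale; apply: aff_entry.
- apply: aff_scale; apply: aff_sub; last exact: aff_entry.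
  by apply: aff_scale; apply: aff_sum => j; apply: aff_entry.
- apply: aff_sub; first exact: aff_cst.
  by apply: aff_sum => k; apply: aff_scale; apply: aff_sum => i; apply: aff_entry.
- by apply: aff_sub; [apply: aff_Gf | apply: aff_cst].
Qed.

Lemma feas P : (forall j, 0 <= g j P) <-> inDelta P /\ inGamma metrics y tau P.
Proof.
split.
  move=> H; split; [split; [|split]|].
  - by move=> i k; have := H (jS i k); rewrite /= pmulr_rge0 ?k1_gt0.
  - by move=> i k; have := H (jA i k); rewrite /= pmulr_rge0 ?k1_gt0 // subr_ge0.
  - by have := H jV; rewrite /= subr_ge0.
  - by move=> l; have := H (jB l); rewrite /= subr_ge0.
move=> [[H1 [H2 H3]] H4] [[[[i k]|[i k]]|o]|l] /=.
- by rewrite pmulr_rge0 ?k1_gt0.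
- by rewrite pmulr_rge0 ?k1_gt0 // subr_ge0.
- by rewrite subr_ge0.
- by rewrite subr_ge0; apply: H4.
Qed.

Lemma sum_pair (F : 'I_n * 'I_n -> R) : \sum_p F p = \sum_i \sum_k F (i, k).
Proof. by rewrite pair_bigA; apply: eq_bigr => -[i k]. Qed.

Lemma swap_lemma (a b : 'I_n -> 'I_n -> R) (c : 'I_n -> R) :
  \sum_i \sum_k a i k * (c k * (c k * \sum_j b j k - b i k)) =
  \sum_i \sum_k b i k * (c k * (c k * \sum_j a j k - a i k)).
Proof.
have E : forall a b : 'I_n -> 'I_n -> R,
  \sum_i \sum_k a i k * (c k * (c k * \sum_j b j k - b i k)) =
  \sum_k c k * c k * (\sum_i a i k) * (\sum_j b j k) - \sum_k \sum_i a i k * c k * b i k.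
  move=> a' b'; rewrite exchange_big -sumrB; apply: eq_bigr => k _.
  rewrite (mulr_sumr _ _ _ (c k * c k)) mulr_suml -sumrB; apply: eq_bigr => i _; ring.
rewrite !E; congr (_ - _).
  by apply: eq_bigr => k _; ring.
by apply: eq_bigr => k _; apply: eq_bigr => i _; ring.
Qed.

Definition Mw (w : J -> R) : 'M[R]_n := \matrix_(i, k) ((k.+1%:R)^-1 *
  (Zq i k + w (jS i k) - w (jA i k) + (k.+1%:R)^-1 * \sum_(j < n) w (jA j k) - w jV
     + \sum_l w (jB l) * Bm l i k)).
Definition K0 (w : J -> R) : R := c0 - ps + w jV + \sum_l w (jB l) * (mu l - tau l).

Lemma Phi_eq (w : J -> R) P : fQ P + \sum_j w j * g j P = K0 w + lf (Mw w) P.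
Proof.
rewrite big_sumType /= big_sumType /= big_sumType /= big_ord1 !sum_pair /=.
set T1 := \sum_i \sum_k _.
set T2 := \sum_i \sum_k _.
have -> : T1 = lf (\matrix_(i, k) ((k.+1%:R)^-1 * w (jS i k))) P.
  rewrite lf_mx; apply: eq_bigr => i _; apply: eq_bigr => k _; rewrite /jS; ring.
have -> : T2 = lf (\matrix_(i, k) ((k.+1%:R)^-1 * ((k.+1%:R)^-1 * \sum_j w (jA j k) - w (jA i k)))) P.
  rewrite lf_mx /T2.
  exact: (swap_lemma (fun i k => w (jA i k)) (fun i k => P i k) (fun k : 'I_n => (k.+1%:R)^-1)).
have -> : \sum_(k < n) (k.+1%:R)^-1 * \sum_(i < n) P i k = lf (\matrix_(i, k) ((k.+1%:R : R)^-1)) P.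
  rewrite lf_mx exchange_big; apply: eq_bigr => k _; rewrite mulr_sumr.
  by apply: eq_bigr => i _; rewrite mulrC.
have -> : \sum_l w (inr l) * (Gf (metrics l) y P - tau l) =
   \sum_l w (jB l) * (mu l - tau l) +
   lf (\sum_l w (jB l) *: \matrix_(i, k) ((k.+1%:R)^-1 * Bm l i k)) P.
  rewrite lf_sum -big_split; apply: eq_bigr => l _.
  by rewrite lfZ G_expand /jB /=; ring.
rewrite f_expand /K0.
have -> : Mw w = \matrix_(i, k) ((k.+1%:R)^-1 * Zq i k)
   + \matrix_(i, k) ((k.+1%:R)^-1 * w (jS i k))
   + \matrix_(i, k) ((k.+1%:R)^-1 * ((k.+1%:R)^-1 * \sum_j w (jA j k) - w (jA i k)))
   + (- w jV) *: \matrix_(i, k) ((k.+1%:R : R)^-1)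
   + \sum_l w (jB l) *: \matrix_(i, k) ((k.+1%:R)^-1 * Bm l i k).
  apply/matrixP => i k; rewrite !mxE summxE.
  rewrite [X in _ = _ + X](_ : _ = (k.+1%:R)^-1 * \sum_l w (jB l) * Bm l i k).
    ring.
  rewrite mulr_sumr; apply: eq_bigr => l _; rewrite ?mxE /Bm /Bff ?mxE; ring.
rewrite !lfD lfZ /jV; ring.
Qed.


Definition constr (al : 'M[R]_n) (be : 'I_t -> R) (v : R) := forall i k : 'I_n,
  Zq i k - al i k + (k.+1%:R)^-1 * \sum_(j < n) al j k + \sum_(l < t) be l * Bm l i k <= v.
Definition obj (be : 'I_t -> R) (v : R) : R :=
  v + c0 - ps + \sum_(l < t) be l * (mu l - tau l).

Lemma c2g (al : 'M[R]_n) (be : 'I_t -> R) (v : R) : (forall i k, 0 <= al i k) -> (forall l, 0 <= be l) -> 0 <= v ->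
  constr al be v -> exists w : J -> R, (forall j, 0 <= w j) /\
    forall P, fQ P + \sum_j w j * g j P = obj be v.
Proof.
move=> Hal Hbe Hv Hc.
pose w (j : J) : R := match j with
  | inl (inl (inl ik)) => v - (Zq ik.1 ik.2 - al ik.1 ik.2 + (ik.2.+1%:R)^-1 * \sum_(j < n) al j ik.2
                              + \sum_(l < t) be l * Bm l ik.1 ik.2)
  | inl (inl (inr ik)) => al ik.1 ik.2
  | inl (inr _) => v
  | inr l => be l end.
exists w; split.
  by case=> [[[[i k]|[i k]]|o]|l] /=; rewrite ?subr_ge0.
move=> P; rewrite Phi_eq.
have -> : Mw w = 0.
  apply/matrixP => i k; rewrite /Mw !mxE /= /Zq /Zff ?mxE; ring.
by rewrite lf0W addr0 /K0 /obj /=; ring.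
Qed.

Lemma weak (al : 'M[R]_n) (be : 'I_t -> R) (v : R) (P : 'M[R]_n) : (forall i k, 0 <= al i k) -> (forall l, 0 <= be l) -> 0 <= v ->
  constr al be v -> inDelta P /\ inGamma metrics y tau P -> fQ P <= obj be v.
Proof.
move=> Hal Hbe Hv Hc /feas HP.
have [w [Hw HwP]] := c2g Hal Hbe Hv Hc.
rewrite -(HwP P) lerDl; apply: sumr_ge0 => j _; exact: mulr_ge0.
Qed.

Lemma g2c (w : J -> R) K : (forall j, 0 <= w j) -> (forall P, fQ P + \sum_j w j * g j P = K) ->
  exists (al : 'M[R]_n) (be : 'I_t -> R) (v : R), [/\ forall i k, 0 <= al i k, (forall l, 0 <= be l) /\ 0 <= v,
     constr al be v & K = obj be v].
Proof.
move=> Hw HK.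
have HK0 : K = K0 w by rewrite -(HK 0) Phi_eq lf0 addr0.
have HM : forall i k, Mw w i k = 0.
  by move=> i k; have := HK (delta_mx i k); rewrite Phi_eq lf_delta HK0 => h; lra.
exists (\matrix_(i, k) w (jA i k)), (fun l => w (jB l)), (w jV); split.
- by move=> i k; rewrite mxE.
- by split => [l|]; apply: Hw.
- move=> i k; have h := HM i k; rewrite /Mw mxE in h.
  move/eqP: h; rewrite mulf_eq0 invr_eq0 (negbTE (k1_neq0 k)) /= => /eqP h.
  rewrite mxE.
  have -> : \sum_(j < n) (\matrix_(i0, k0) w (jA i0 k0)) j k = \sum_(j < n) w (jA j k).
    by apply: eq_bigr => j _; rewrite mxE.
  have := Hw (jS i k); move: h; set S1 := \sum_(j < n) _; set S2 := \sum_(l < t) _.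
  move=> h hs; move: h; set T := _ * S1 => h; lra.
- by move: HK0 => ->; rewrite /K0 /obj; ring.
Qed.

Lemma le_sum1 (I : finType) (F : I -> R) i0 : (forall i, 0 <= F i) -> F i0 <= \sum_i F i.
Proof. by move=> H; rewrite (bigD1 i0) //= lerDl sumr_ge0. Qed.

Lemma dual_feasible : exists (w0 : J -> R) K0, (forall j, 0 <= w0 j) /\
      forall P, fQ P + \sum_j w0 j * g j P = K0.
Proof.
pose V := \sum_(i < n) \sum_(k < n) `|Zq i k|.
have HV : 0 <= V by apply: sumr_ge0 => i _; apply: sumr_ge0 => k _.
have z0 : forall i k, (0 : 'M[R]_n) i k = 0 by move=> i k; rewrite mxE.
have H0 : forall i k, 0 <= (0 : 'M[R]_n) i k by move=> i k; rewrite z0.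
have Hc : constr 0 (fun _ => 0) V.
  move=> i k; rewrite z0 subr0 big1 ?mulr0 ?addr0; last by move=> j _; rewrite z0.
  rewrite big1 ?addr0; last by move=> l _; rewrite mul0r.
  apply: le_trans (ler_norm _) _.
  have h1 := @le_sum1 _ (fun k : 'I_n => (`|Zq i k| : R)) k (fun _ => normr_ge0 _).
  have h2 := @le_sum1 _ (fun i : 'I_n => (\sum_(k < n) `|Zq i k| : R)) i (fun i' => sumr_ge0 _ (fun k _ => normr_ge0 _)).
  exact: le_trans h1 h2.
have [w [Hw HP]] := @c2g 0 (fun _ => 0) V H0 (fun _ => lexx 0) HV Hc.
by exists w, (obj (fun _ => 0) V).
Qed.

Local Open Scope ereal_scope.

Lemma ereal_approx (x z : \bar R) : (forall M : R, z < M%:E -> x <= M%:E) -> x <= z.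
Proof.
case: z => [r| |] H.
- case: x H => [s| |] H.
  + rewrite lee_fin leNgt; apply/negP => hlt.
    have := H ((s + r) / 2)%R; rewrite !lte_fin lee_fin => h.
    have : (r < (s + r) / 2)%R by lra.
    by move/h; lra.
  + by have := H (r + 1)%R; rewrite lte_fin ltrDl ltr01 => /(_ isT).
  + exact: leNye.
- exact: leey.
- case: x H => [s| |] H.
  + have h := H (s - 1%R)%R (ltNyr _); move: h; rewrite lee_fin => h; exfalso; lra.
  + by have := H 0%R (ltNyr _).
  + exact: lexx.
Qed.

Lemma perQ :
  ereal_sup [set ((O0 met0 Q P - dotv (Q1 Q) (PsiT_theta Psi theta))%:E)
         | P in [set P | inDelta P /\ inGamma metrics y tau P]] =
  ereal_inf [set z : \bar R | exists (alpha : 'M[R]_n) (beta : 'I_t -> R) (v : R),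
     [/\ (forall i k, 0 <= alpha i k)%R, (forall l, 0 <= beta l)%R /\ (0 <= v)%R,
      constr alpha beta v & z = (obj beta v)%:E]].
Proof.
apply/le_anti/andP; split.
  apply: ge_ereal_sup => _ [P HP <-].
  apply: le_ereal_inf_tmp => _ [al [be [v [Hal [Hbe Hv] Hc ->]]]].
  by rewrite lee_fin; exact: (weak Hal Hbe Hv Hc HP).
apply: ereal_approx => M HM.
have Hlt : forall P, (forall j, 0 <= g j P)%R -> (fQ P < M)%R.
  move=> P /feas HP; rewrite -lte_fin; apply: le_lt_trans HM.
  by apply: ereal_sup_ubound; exists P.
have Hf : affP (fun P => fQ P) by apply: aff_sub; [apply: aff_O0P | apply: aff_cst].
have [w [K [Hw HKM HK]]] := lp_strong hn g_aff Hf dual_feasible Hlt.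
have [al [be [v [Hal Hbv Hc HKo]]]] := g2c Hw HK.
apply: (@le_trans _ _ K%:E); last by rewrite lee_fin.
by apply: ereal_inf_lbound; exists al, be, v; split => //; rewrite HKo.
Qed.

End PerQ.

Unset Implicit Arguments. Set Strict Implicit.

Theorem theorem6 (R : realType) (n : nat) (hn : (0 < n)%N) :
  exists (C : metric R -> 'M[R]_n -> R) (Zf : metric R -> 'M[R]_n -> 'M[R]_n)
         (Mu : metric R -> ('I_n -> bool) -> R)
         (Bf : metric R -> ('I_n -> bool) -> 'M[R]_n),
    (forall met : metric R, affine_fun (C met) /\ affine_mx (Zf met)) /\
    forall (m t : nat) (met0 : metric R) (metrics : 'I_t -> metric R)
           (y : 'I_n -> bool) (Psi : 'M[R]_(m, n)) (tau : 'I_t -> R)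
           (theta : 'cV[R]_m),
      (0 < m)%N -> (0 < t)%N ->
      g_nonzero n met0 -> (forall l, g_nonzero n (metrics l)) ->
      minmax_value met0 metrics y tau Psi theta =
      lp_value (C met0) (Zf met0) (fun l => Mu (metrics l) y)
               (fun l => Bf (metrics l) y) tau Psi theta.
Proof.
exists (@Cf R n), (@Zff R n), (@Muf R n), (@Bff R n); split.
  by move=> met; split; [exact: Cf_affine | exact: Zff_affine].
move=> m t met0 metrics y Psi tau theta _ _ _ _.
rewrite /minmax_value /lp_value.
apply/le_anti/andP; split.
- apply: le_ereal_inf_tmp => _ [Q [al [be [v [HQ Hal [Hbe Hv] Hc ->]]]]].
  apply: (le_trans (ereal_inf_lbound _)); first by exists Q.
  rewrite (perQ met0 metrics y Psi tau theta Q hn).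
  by apply: ereal_inf_lbound; exists al, be, v; split.
- apply: le_ereal_inf_tmp => _ [Q HQ <-].
  rewrite (perQ met0 metrics y Psi tau theta Q hn).
  apply: le_ereal_inf => _ [al [be [v [Hal [Hbe Hv] Hc ->]]]].
  by exists Q, al, be, v; split.
Qed.
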